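(* Let $\gamma>0$ and $\lambda_k\coloneqq-\gamma+ik$ for $k\in\mathbb{N}$. Let $A$ be the diagonal operator on $\ell^2$ given by $A(\zeta_k)_{k\in\mathbb{N}}=(\lambda_k\zeta_k)_{k\in\mathbb{N}}$ with domain $D(A)=\{(\zeta_k)\in\ell^2:(\lambda_k\zeta_k)\in\ell^2\}$ (which generates an exponentially stable $C_0$-semigroup). Then for every $\alpha>0$, \[ \liminf_{t\to\infty} t^{\alpha/2}\big\|e^{A^{-1}t}(-A)^{-\alpha}\big\|\ge\Big(\frac{\alpha}{2e\gamma}\Big)^{\alpha/2}. \]
   Context: $\ell^2$ is the Hilbert space of square-summable complex sequences. For this diagonal operator, $e^{A^{-1}t}(-A)^{-\alpha}$ is the diagonal operator with entries $e^{t/\lambda_k}(-\lambda_k)^{-\alpha}$ (principal branch). *)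

(* Defs.v *)
From Stdlib Require Import Reals.
From Coquelicot Require Import Coquelicot.
Open Scope R_scope.

(* Principal argument in (-PI, PI]. *)
Definition Carg (z : C) : R :=
  let x := Re z in let y := Im z in
  if Rlt_dec 0 x then atan (y / x)
  else if Rlt_dec x 0 then
         (if Rle_dec 0 y then atan (y / x) + PI else atan (y / x) - PI)
  else if Rlt_dec 0 y then PI / 2
  else if Rlt_dec y 0 then - (PI / 2)
  else 0.

Definition Cexp (w : C) : C :=
  (exp (Re w) * cos (Im w), exp (Re w) * sin (Im w)).

Definition Cpow_real (z : C) (s : R) : C :=
  Cexp (RtoC s * (RtoC (ln (Cmod z)) + (0, 1) * RtoC (Carg z)))%C.

Definition in_l2 (x : nat -> C) : Prop :=
  ex_series (fun k => (Cmod (x k)) ^ 2).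

Definition l2norm (x : nat -> C) : R :=
  sqrt (Series (fun k => (Cmod (x k)) ^ 2)).

(* Operator norm on l^2 of the diagonal operator with entries d
   (value in Rbar, +oo if unbounded). *)
Definition diag_opnorm (d : nat -> C) : Rbar :=
  Lub_Rbar (fun r => exists x, in_l2 x /\ l2norm x <= 1 /\
                          r = l2norm (fun k => (d k * x k)%C)).

Definition lam (gamma : R) (k : nat) : C := (- gamma, INR k).

(* Diagonal entries of e^{A^{-1} t} (-A)^{-alpha}:
   e^{t / lambda_k} (-lambda_k)^{-alpha} (principal branch). *)
Definition semigroup_entry (gamma alpha t : R) (k : nat) : C :=
  (Cexp (RtoC t / lam gamma k) * Cpow_real (- lam gamma k) (- alpha))%C.

Definition liminf_ge (f : R -> Rbar) (L : R) : Prop :=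
  forall eps : R, 0 < eps ->
    exists T : R, forall t : R, T <= t -> Rbar_le (Finite (L - eps)) (f t).

(* Main.v *)
Require Import Defs.
From Stdlib Require Import Reals Lra Lia ZArith FunctionalExtensionality.
From Coquelicot Require Import Coquelicot.
Open Scope R_scope.

Definition delta (k : nat) (c : R) (n : nat) : R :=
  if Nat.eq_dec n k then c else 0.

Lemma delta_sum_lt k c n : (n < k)%nat -> sum_f_R0 (delta k c) n = 0.
Proof.
  induction n; intros H; cbn [sum_f_R0].
  - unfold delta. destruct (Nat.eq_dec 0 k); [lia|lra].
  - rewrite IHn by lia. unfold delta. destruct (Nat.eq_dec (S n) k); [lia|lra].
Qed.

Lemma delta_sum_ge k c n : (k <= n)%nat -> sum_f_R0 (delta k c) n = c.
Proof.
  induction n; intros H; cbn [sum_f_R0].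
  - unfold delta. destruct (Nat.eq_dec 0 k); [lra|lia].
  - unfold delta at 2. destruct (Nat.eq_dec (S n) k).
    + rewrite delta_sum_lt by lia. lra.
    + rewrite IHn by lia. lra.
Qed.

Lemma delta_is_series k c : is_series (delta k c) c.
Proof.
  change (is_lim_seq (sum_n (delta k c)) c).
  apply is_lim_seq_ext_loc with (u := fun _ => c).
  - exists k. intros n Hn. rewrite sum_n_Reals. symmetry. apply delta_sum_ge. lia.
  - apply is_lim_seq_const.
Qed.

Lemma opnorm_ge (d : nat -> C) (k : nat) : Rbar_le (Finite (Cmod (d k))) (diag_opnorm d).
Proof.
  unfold diag_opnorm.
  destruct (Lub_Rbar_correct (fun r => exists x, in_l2 x /\ l2norm x <= 1 /\
                          r = l2norm (fun k => (d k * x k)%C))) as [Hub _].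
  apply Hub.
  set (x := fun n => if Nat.eq_dec n k then RtoC 1 else RtoC 0).
  assert (Hx : (fun n => (Cmod (d n * x n)%C) ^ 2) = delta k (Cmod (d k) ^ 2)).
  { apply functional_extensionality. intros n. unfold x, delta.
    destruct (Nat.eq_dec n k).
    - subst. rewrite Cmult_1_r. reflexivity.
    - rewrite Cmult_0_r, Cmod_0. simpl. ring. }
  assert (Hx1 : (fun n => (Cmod (x n)) ^ 2) = delta k 1).
  { apply functional_extensionality. intros n. unfold x, delta.
    destruct (Nat.eq_dec n k).
    - rewrite Cmod_1. ring.
    - rewrite Cmod_0. simpl. ring. }
  exists x. split; [|split].
  - unfold in_l2. rewrite Hx1. eexists. apply delta_is_series.
  - unfold l2norm. rewrite Hx1. rewrite (is_series_unique _ _ (delta_is_series k 1)).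
    rewrite sqrt_1. lra.
  - unfold l2norm. rewrite Hx.
    rewrite (is_series_unique _ _ (delta_is_series k _)).
    rewrite sqrt_pow2; auto. apply Cmod_ge_0.
Qed.

Lemma Cmod_Cexp w : Cmod (Cexp w) = exp (Re w).
Proof.
  unfold Cexp, Cmod; cbn [fst snd Re].
  replace ((exp (Re w) * cos (Im w)) ^ 2 + (exp (Re w) * sin (Im w)) ^ 2)
    with (exp (Re w) ^ 2) .
  - apply sqrt_pow2. left; apply exp_pos.
  - pose proof (sin2_cos2 (Im w)) as HH. unfold Rsqr in HH. replace (exp (Re w) ^ 2) with (exp (Re w) ^ 2 * 1) by ring. rewrite <- HH. ring.
Qed.

Lemma ln_sqrt' s : 0 < s -> ln (sqrt s) = ln s / 2.
Proof.
  intros Hs. assert (H := sqrt_lt_R0 s Hs).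
  rewrite <- (sqrt_sqrt s) at 2 by lra. rewrite ln_mult by lra. lra.
Qed.

Lemma entry_mod gamma alpha t k : 0 < gamma ->
  Cmod (semigroup_entry gamma alpha t k) =
  exp (- t * gamma / (gamma ^ 2 + INR k ^ 2)) *
  exp (- alpha * (ln (gamma ^ 2 + INR k ^ 2) / 2)).
Proof.
  intros Hg.
  assert (Hs : 0 < gamma ^ 2 + INR k ^ 2).
  { assert (0 <= INR k ^ 2) by (apply pow2_ge_0). nra. }
  unfold semigroup_entry, Cpow_real. rewrite Cmod_mult, !Cmod_Cexp.
  f_equal; f_equal.
  - unfold lam. simpl. field. lra.
  - unfold lam. simpl.
    replace (Cmod (- (- gamma, INR k))) with (sqrt (gamma ^ 2 + INR k ^ 2)).
    + rewrite ln_sqrt' by lra. replace (gamma * (gamma * 1) + INR k * (INR k * 1)) with (gamma ^ 2 + INR k ^ 2) by ring. ring.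
    + unfold Cmod. simpl. f_equal. ring.
Qed.

Lemma ln_le' x y : 0 < x -> x <= y -> ln x <= ln y.
Proof. intros Hx [H|H]. left; apply ln_increasing; auto. subst; lra. Qed.
Lemma exp_le' x y : x <= y -> exp x <= exp y.
Proof. intros [H|H]. left; apply exp_increasing; auto. subst; lra. Qed.

Lemma mult_ge x y N : 0 < x -> Rbar_le (Finite y) N -> Rbar_le (Finite (x*y)) (Rbar_mult (Finite x) N).
Proof.
  intros Hx HN. destruct N as [r| |]; simpl in *.
  - apply Rmult_le_compat_l; lra.
  - destruct (Rle_dec 0 x) as [Hx0|]; [|lra]. destruct (Rle_lt_or_eq_dec 0 x Hx0); simpl; auto. lra.
  - contradiction.
Qed.

Lemma key gamma alpha eps : 0 < gamma -> 0 < alpha -> 0 < eps ->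
  exists T, 0 < T /\ forall t, T <= t -> exists k : nat,
    exp (alpha / 2 * ln t) * (exp (- t * gamma / (gamma ^ 2 + INR k ^ 2)) *
      exp (- alpha * (ln (gamma ^ 2 + INR k ^ 2) / 2)))
    >= Rpower (alpha / (2 * exp 1 * gamma)) (alpha / 2) - eps.
Proof.
  intros Hg Ha He.
  set (L := Rpower (alpha / (2 * exp 1 * gamma)) (alpha / 2)).
  assert (HL : 0 < L) by (apply exp_pos).
  set (u0 := alpha / (2 * gamma)).
  assert (Hu0 : 0 < u0) by (unfold u0; apply Rdiv_lt_0_compat; lra).
  set (delta := 2 * eps / (alpha * L)).
  assert (Hd : 0 < delta) by (unfold delta; apply Rdiv_lt_0_compat; nra).
  set (r := exp (- delta)).
  assert (Hr0 : 0 < r) by apply exp_pos.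
  assert (Hr1 : r < 1) by (unfold r; rewrite <- exp_0; apply exp_increasing; lra).
  set (m := / r - 1).
  assert (Hm : 0 < m).
  { unfold m. assert (1 < / r). { rewrite <- Rinv_1. apply Rinv_lt_contravar; lra. } lra. }
  exists (u0 * (gamma ^ 2 + 1 + 9 / m ^ 2)).
  assert (H9 : 0 < 9 / m ^ 2) by (apply Rdiv_lt_0_compat; nra).
  split. { apply Rmult_lt_0_compat; nra. }
  intros t Ht.
  set (a := t / u0).
  assert (Ha1 : gamma ^ 2 + 1 + 9 / m ^ 2 <= a).
  { unfold a. apply Rmult_le_reg_r with u0; auto. replace (t / u0 * u0) with t by (field; lra). lra. }
  assert (Htpos : 0 < t) by nra.
  set (x := sqrt (a - gamma ^ 2)).
  assert (Hx0 : 0 <= x) by apply sqrt_pos.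
  assert (Hxx : x * x = a - gamma ^ 2) by (apply sqrt_sqrt; nra).
  destruct (archimed x) as [Hz1 Hz2].
  set (z := up x) in *.
  assert (Hzpos : (0 <= z)%Z). { apply le_IZR. lra. }
  exists (Z.to_nat z).
  rewrite INR_IZR_INZ, Z2Nat.id by auto.
  set (k := IZR z) in *.
  set (s := gamma ^ 2 + k ^ 2).
  assert (Ha1b : 1 <= a) by (pose proof (pow2_ge_0 gamma); lra).
  set (y := sqrt a).
  assert (Hyy : y * y = a) by (apply sqrt_sqrt; nra).
  assert (Hy0 : 0 <= y) by apply sqrt_pos.
  assert (Hxy : x <= y) by (unfold x, y; apply sqrt_le_1_alt; pose proof (pow2_ge_0 gamma); lra).
  assert (Hy1 : 1 <= y) by nra.
  assert (Hmy : 3 <= m * y).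
  { assert (9 <= a * m ^ 2).
    { apply Rmult_le_reg_r with (/ m ^ 2). apply Rinv_0_lt_compat; nra.
      replace (a * m ^ 2 * / m ^ 2) with a by (field; lra). unfold Rdiv in Ha1. pose proof (pow2_ge_0 gamma); lra. }
    assert (Hq : (m*y)*(m*y) = a*m^2) by (rewrite <- Hyy; ring).
    assert (0 <= m*y) by nra. nra. }
  assert (Hsa : a <= s) by (unfold s; nra).
  assert (Hsr : s <= a * (1 + m)).
  { unfold s. assert (k <= x + 1) by lra. nra. }
  assert (Hspos : 0 < s) by nra.
  set (u := t / s).
  assert (Hu_le : u <= u0).
  { unfold u. apply Rmult_le_reg_r with s; auto. replace (t / s * s) with t by (field; lra).
    unfold a in Hsa. replace t with (t / u0 * u0) by (field; lra). nra. }
  assert (Hr' : 1 + m = / r) by (unfold m; ring).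
  assert (Hu_ge : u0 * r <= u).
  { unfold u. apply Rmult_le_reg_r with s; auto. replace (t / s * s) with t by (field; lra).
    rewrite Hr' in Hsr. unfold a in Hsr.
    assert (s * r <= t / u0) .
    { apply Rmult_le_reg_r with (/ r). apply Rinv_0_lt_compat; lra.
      rewrite Rmult_assoc, Rinv_r, Rmult_1_r by lra. exact Hsr. }
    replace t with (t / u0 * u0) by (field; lra). nra. }
  assert (Hupos : 0 < u) by nra.
  assert (Hlnu : ln u0 - delta <= ln u).
  { replace (ln u0 - delta) with (ln (u0 * r)).
    - apply ln_le'; nra.
    - rewrite ln_mult by lra. unfold r. rewrite ln_exp. ring. }
  assert (HLHS : exp (alpha / 2 * ln t) * (exp (- t * gamma / s) *
      exp (- alpha * (ln s / 2))) = exp (- gamma * u + alpha / 2 * ln u)).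
  { rewrite <- !exp_plus. f_equal.
    replace (ln u) with (ln t - ln s).
    - unfold u. field. lra.
    - unfold u, Rdiv. rewrite ln_mult, ln_Rinv; try apply Rinv_0_lt_compat; lra. }
  fold s. rewrite HLHS.
  assert (HLe : L = exp (alpha / 2 * (ln u0 - 1))).
  { unfold L, Rpower. f_equal. f_equal.
    replace (alpha / (2 * exp 1 * gamma)) with (u0 * / exp 1) by (unfold u0; field; split; [lra|apply Rgt_not_eq, exp_pos]).
    rewrite ln_mult, ln_Rinv, ln_exp; [ring|apply exp_pos|auto|apply Rinv_0_lt_compat, exp_pos]. }
  apply Rle_ge.
  apply Rle_trans with (L * exp (- (eps / L))).
  - pose proof (exp_ineq1_le (- (eps / L))) as H1.
    replace (L - eps) with (L * (1 + - (eps / L))) by (field; lra). apply Rmult_le_compat_l; lra.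
  - rewrite HLe, <- exp_plus. apply exp_le'.
    assert (alpha / 2 * delta = eps / L) as Hdl.
    { unfold delta. field. split; lra. }
    rewrite <- HLe.
    assert (- gamma * u >= - gamma * u0) by nra.
    assert (- gamma * u0 = - (alpha / 2)) by (unfold u0; field; lra).
    nra.
Qed.

Theorem mainTheorem3 (gamma alpha : R) (hgamma : 0 < gamma) (halpha : 0 < alpha) :
  liminf_ge
    (fun t => Rbar_mult (Finite (Rpower t (alpha / 2)))
                        (diag_opnorm (semigroup_entry gamma alpha t)))
    (Rpower (alpha / (2 * exp 1 * gamma)) (alpha / 2)).
Proof.
  intros eps Heps.
  destruct (key gamma alpha eps hgamma halpha Heps) as [T [HT HTt]].
  exists T. intros t Ht.
  destruct (HTt t Ht) as [k Hk].
  eapply Rbar_le_trans; [| apply mult_ge; [apply exp_pos | apply (opnorm_ge _ k)]].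
  simpl. rewrite entry_mod by auto. unfold Rpower in *. lra.
Qed.
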